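(* Let $n \ge 4$ be even, let $s = n/2$ and $m = n/s = 2$. There exists a nonsingular matrix $A \in \mathbb{Q}^{n\times n}$ with $n$ distinct eigenvalues such that for every $v \in \mathbb{Q}^{n\times s}$ of the block-diagonal sparse form $$v = \begin{bmatrix} \ast & & & \\ & \ast & & \\ & & \ddots & \\ & & & \ast \end{bmatrix},$$ where each $\ast$ is an arbitrary $m\times 1 = 2\times 1$ column and all other entries are zero, the matrix $\mathcal{K}(A,v)$ is singular. For instance, for $n=4$ one may take $$A = \begin{bmatrix} 3&0&0&0\\ 0&5&-1&0\\ 0&4&10&0\\ 0&0&0&12\end{bmatrix},$$ for which $\mathcal{K}(A,v)$ is singular for all $v = \begin{bmatrix} a_1 & 0\\ a_2 & 0\\ 0 & b_1\\ 0 & b_2\end{bmatrix}$.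
   Context: For a field $F$, a matrix $A \in F^{n\times n}$, a divisor $s$ of $n$ and $m = n/s$, and a block $v \in F^{n\times s}$, define the block Krylov matrix $\mathcal{K}(A,v) := [\, v \mid Av \mid A^2 v \mid \cdots \mid A^{m-1}v \,] \in F^{n\times n}$. *)

(* Defs.v *)
From HB Require Import structures.
From mathcomp Require Import all_boot all_order all_algebra all_field.
Set Implicit Arguments. Unset Strict Implicit. Unset Printing Implicit Defensive.
Import GRing.Theory.
Local Open Scope ring_scope.

Lemma krylov_width (m s : nat) : (\sum_(k < m) s)%N = (m * s)%N.
Proof. by rewrite big_const_ord iter_addn_0 mulnC. Qed.

Definition krylov_mx (F : pzRingType) (n s m : nat)
  (A : 'M[F]_n) (v : 'M[F]_(n, s)) : 'M[F]_(n, m * s) :=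
  castmx (erefl n, krylov_width m s) (mxrow (fun k : 'I_m => A ^+ k *m v)).

Definition block_diag_sparse (F : pzRingType) (m s : nat) (v : 'M[F]_(m * s, s)) : Prop :=
  forall (i : 'I_(m * s)) (j : 'I_s), (i %/ m)%N != j -> v i j = 0.

(* Main.v *)
Require Import Defs.
From HB Require Import structures.
From mathcomp Require Import all_boot all_order all_algebra all_field.
From mathcomp Require Import zify ring lra.
Local Open Scope ring_scope.
Import GRing.Theory Num.Theory.

Definition dA (i : nat) : nat := if i == 1%N then 5%N else if i == 2%N then 10%N else (3 * i.+1)%N.

Definition Am (F : pzRingType) n : 'M[F]_n :=
  \matrix_(i, j) (if (i == j :> nat) then (dA i)%:R
     else if (i == 1%N :> nat) && (j == 2%N :> nat) then -1
     else if (i == 2%N :> nat) && (j == 1%N :> nat) then 4%:R else 0).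

Lemma sum_one (F : pzRingType) n (f : 'I_n -> F) a :
  (forall k, k != a -> f k = 0) -> \sum_k f k = f a.
Proof. move=> H; rewrite (bigD1 a) //= big1 ?addr0 // => k /H. Qed.

Lemma sum_two (F : pzRingType) n (f : 'I_n -> F) a b : a != b ->
  (forall k, k != a -> k != b -> f k = 0) -> \sum_k f k = f a + f b.
Proof.
move=> ab H; rewrite (bigD1 a) //= (bigD1 b) 1?eq_sym //= big1 ?addr0 ?addrA //.
by move=> k /andP[kb ka]; apply: H.
Qed.

Arguments sum_one {F n f} a.
Arguments sum_two {F n f a b}.
Lemma rowAm (F : pzRingType) n (i1 i2 : 'I_n) (h1 : val i1 = 1%N) (h2 : val i2 = 2%N)
  (u : 'rV[F]_n) j :
  (u *m Am F n) 0 j =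
  if (val j == 1%N) then u 0 i1 * 5%:R + u 0 i2 * 4%:R
  else if (val j == 2%N) then u 0 i1 * (-1) + u 0 i2 * 10%:R
  else u 0 j * (3 * j.+1)%:R.
Proof.
have n12 : i1 != i2 by rewrite -val_eqE h1 h2.
rewrite mxE.
case: ifP => j1.
  rewrite (sum_two n12); last first.
    move=> k k1 k2; rewrite mxE; move/eqP: j1 => ->.
    have k1' : (val k == 1%N) = false by apply/negbTE; rewrite -h1 val_eqE.
    have k2' : (val k == 2%N) = false by apply/negbTE; rewrite -h2 val_eqE.
    by rewrite k1' k2' /= mulr0.
  by rewrite !mxE h1 h2 (eqP j1) /=.
case: ifP => j2.
  rewrite (sum_two n12); last first.
    move=> k k1 k2; rewrite mxE; move/eqP: j2 => ->.
    have k1' : (val k == 1%N) = false by apply/negbTE; rewrite -h1 val_eqE.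
    have k2' : (val k == 2%N) = false by apply/negbTE; rewrite -h2 val_eqE.
    by rewrite k1' k2' /= mulr0.
  by rewrite !mxE h1 h2 (eqP j2) /=.
rewrite (sum_one j) ?mxE ?eqxx /dA ?j1 ?j2 //.
move=> k kj; rewrite mxE j1 j2 !andbF; case: ifP; last by rewrite mulr0.
by move=> /eqP/val_inj kj'; rewrite kj' eqxx in kj.
Qed.

Definition Ck {m s : nat} (j : 'I_m) (jj : 'I_s) : 'I_(m * s) :=
  cast_ord (krylov_width m s) (tagnat.Rank (p_ := fun _ : 'I_m => s) j jj).

Lemma col_krylov (F : pzRingType) n s m (A : 'M[F]_n) (v : 'M[F]_(n, s)) (j : 'I_m) (jj : 'I_s) :
  col (Ck j jj) (krylov_mx m A v) = col jj (A ^+ j *m v).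
Proof.
apply/colP => i; rewrite [LHS]mxE [RHS]mxE castmxE /= cast_ord_id /Ck cast_ordK mxE.
have -> : tagnat.sig2 (tagnat.Rank (p_ := fun _ : 'I_m => s) j jj) = jj.
  by apply: val_inj; rewrite tagnat.Rank2K.
by rewrite tagnat.Rank1K.
Qed.

Lemma Ck_eq m s (j j' : 'I_m) (jj jj' : 'I_s) :
  (Ck j jj == Ck j' jj') = (j == j') && (jj == jj').
Proof. by rewrite -val_eqE /= tagnat.eq_Rank. Qed.

Section Cols.
Variables (F : pzRingType) (s : nat) (hs : (2 <= s)%N).
Let n := (2 * s)%N.
Lemma lt0 : (0 < 2 * s)%N. Proof. lia. Qed.
Definition o0 : 'I_(2 * s) := Ordinal lt0.
Lemma lt1 : (1 < 2 * s)%N. Proof. lia. Qed.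
Definition o1 : 'I_(2 * s) := Ordinal lt1.
Lemma lt2 : (2 < 2 * s)%N. Proof. lia. Qed.
Definition o2 : 'I_(2 * s) := Ordinal lt2.
Lemma lt3 : (3 < 2 * s)%N. Proof. lia. Qed.
Definition o3 : 'I_(2 * s) := Ordinal lt3.
Notation e k := (delta_mx k (0 : 'I_1) : 'cV[F]_(2 * s)).
Notation A := (Am F (2 * s)).

Lemma colA0 : col o0 A = 3%:R *: e o0.
Proof. apply/colP => i; rewrite !mxE -?val_eqE /=;
  case: i => [[|[|[|[|kk]]]] Hk] /=; rewrite /dA /= ?mulr0 ?mulr1 ?addr0 ?add0r ?subr0 //. Qed.
Lemma colA1 : col o1 A = 5%:R *: e o1 + 4%:R *: e o2.
Proof. apply/colP => i; rewrite !mxE -?val_eqE /=;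
  case: i => [[|[|[|[|kk]]]] Hk] /=; rewrite /dA /= ?mulr0 ?mulr1 ?addr0 ?add0r ?subr0 //. Qed.
Lemma colA2 : col o2 A = - e o1 + 10%:R *: e o2.
Proof. apply/colP => i; rewrite !mxE -?val_eqE /=;
  case: i => [[|[|[|[|kk]]]] Hk] /=; rewrite /dA /= ?mulr0 ?mulr1 ?addr0 ?add0r ?subr0 //. all: by rewrite ?oppr0 ?add0r. Qed.
Lemma colA3 : col o3 A = 12%:R *: e o3.
Proof. apply/colP => i; rewrite !mxE -?val_eqE /=;
  case: i => [[|[|[|[|kk]]]] Hk] /=; rewrite /dA /= ?mulr0 ?mulr1 ?addr0 ?add0r ?subr0 //. Qed.
End Cols.

Arguments o0 {s} hs. Arguments o1 {s} hs. Arguments o2 {s} hs. Arguments o3 {s} hs.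

Lemma A_unit s (hs : (2 <= s)%N) : Am rat (2 * s) \in unitmx.
Proof.
rewrite -row_free_unit -kermx_eq0; apply/eqP/row_matrixP => r; rewrite row0.
set u := row r _.
have hu : u *m Am rat (2 * s) = 0 by apply/sub_kermxP; exact: row_sub.
have E j := @rowAm _ _ (o1 hs) (o2 hs) erefl erefl u j.
have Z j : (u *m Am rat (2 * s)) 0 j = 0 by rewrite hu mxE.
have e1 := E (o1 hs); rewrite Z /= in e1.
have e2 := E (o2 hs); rewrite Z /= in e2.
have [ha hb] : u 0 (o1 hs) = 0 /\ u 0 (o2 hs) = 0 by split; lra.
apply/rowP => k; rewrite [RHS]mxE.
case: (val k =P 1%N) => [k1|nk1].
  by have -> : k = o1 hs; first by apply: val_inj.
case: (val k =P 2%N) => [k2|nk2].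
  by have -> : k = o2 hs; first by apply: val_inj.
have := E k; rewrite Z (introF eqP nk1) (introF eqP nk2) => /esym/eqP.
have nz : (3 * k.+1)%:R != 0 :> rat by rewrite pnatr_eq0 muln_eq0.
by rewrite mulf_eq0 (negPf nz) orbF => /eqP.
Qed.

Lemma mapA n : map_mx ratr (Am rat n) = Am algC n.
Proof.
apply/matrixP => i j; rewrite !mxE.
case: ifP => _; first exact: rmorph_nat.
case: ifP => _; first exact: rmorphN1.
case: ifP => _; [exact: rmorph_nat | exact: rmorph0].
Qed.

Lemma A_eig s (hs : (2 <= s)%N) (i : 'I_(2 * s)) :
  eigenvalue (Am algC (2 * s)) (3 * i.+1)%:R.
Proof.
apply/eigenvalueP.
have R u j := @rowAm _ _ (o1 hs) (o2 hs) erefl erefl u j.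
case: (val i =P 1%N) => [i1|ni1].
  exists (\row_k (if val k == 1%N then 4%:R else if val k == 2%N then 1 else 0)).
    apply/rowP => j; rewrite R !mxE /= i1.
    case: (@eqP _ (nat_of_ord j) 1%N) => [_|_] /=; first by ring.
    case: (@eqP _ (nat_of_ord j) 2%N) => [_|_] /=; first by ring.
    by rewrite !mul0r mulr0.
  apply/negP => /eqP/rowP/(_ (o1 hs)); rewrite !mxE /= => /eqP.
  by rewrite pnatr_eq0.
case: (val i =P 2%N) => [i2|ni2].
  exists (\row_k (if val k == 1%N then 1 else if val k == 2%N then 1 else 0)).
    apply/rowP => j; rewrite R !mxE /= i2.
    case: (@eqP _ (nat_of_ord j) 1%N) => [_|_] /=; first by ring.
    case: (@eqP _ (nat_of_ord j) 2%N) => [_|_] /=; first by ring.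
    by rewrite !mul0r mulr0.
  apply/negP => /eqP/rowP/(_ (o1 hs)); rewrite !mxE /= => /eqP.
  by rewrite oner_eq0.
exists (delta_mx 0 i).
  apply/rowP => j; rewrite R !mxE /=.
  have -> : (o1 hs == i) = false by apply/negbTE; rewrite -val_eqE /=; apply/eqP => h; apply: ni1.
  have -> : (o2 hs == i) = false by apply/negbTE; rewrite -val_eqE /=; apply/eqP => h; apply: ni2.
  case: (val j =P 1%N) => [j1|_] /=.
    have -> : (j == i) = false by apply/negbTE; rewrite -val_eqE j1; apply/eqP => h; apply: ni1.
    by rewrite !mul0r addr0 mulr0.
  case: (val j =P 2%N) => [j2|_] /=.
    have -> : (j == i) = false by apply/negbTE; rewrite -val_eqE j2; apply/eqP => h; apply: ni2.
    by rewrite !mul0r addr0 mulr0.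
  case: (j =P i) => [->|_] /=; first by rewrite mul1r mulr1.
  by rewrite mul0r mulr0.
apply/negP => /eqP/rowP/(_ i); rewrite !mxE !eqxx /= => /eqP.
by rewrite oner_eq0.
Qed.

Lemma colsupp (F : pzRingType) n s (M : 'M[F]_(n, s)) j p q : p != q ->
  (forall k, k != p -> k != q -> M k j = 0) ->
  col j M = M p j *: delta_mx p 0 + M q j *: delta_mx q 0.
Proof.
move=> pq H; apply/colP => i; rewrite !mxE.
case: (i =P p) => [->|ip] /=.
  by rewrite (negPf pq) mulr1 mulr0 addr0.
case: (i =P q) => [->|iq] /=; first by rewrite mulr0 mulr1 add0r.
by rewrite !mulr0 addr0; apply: H; apply/eqP.
Qed.

Lemma krylov_sing s (hs : (2 <= s)%N) (v : 'M[rat]_(2 * s, s)) :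
  block_diag_sparse v -> \det (krylov_mx 2 (Am rat (2 * s)) v) = 0.
Proof.
move=> hv.
have l0 : (0 < s)%N by lia.
have l1 : (1 < s)%N by lia.
pose j0 : 'I_s := Ordinal l0.
pose j1 : 'I_s := Ordinal l1.
pose t0 : 'I_2 := Ordinal (isT : (0 < 2)%N).
pose t1 : 'I_2 := Ordinal (isT : (1 < 2)%N).
set A := Am rat (2 * s).
have n01 : o0 hs != o1 hs by rewrite -val_eqE.
have n23 : o2 hs != o3 hs by rewrite -val_eqE.
have cv0 : col j0 v = v (o0 hs) j0 *: delta_mx (o0 hs) 0 + v (o1 hs) j0 *: delta_mx (o1 hs) 0.
  apply: colsupp => // k k0 k1; apply: hv.
  rewrite -val_eqE /= in k0; rewrite -val_eqE /= in k1.
  apply/eqP => /= h; move/eqP: k0; move/eqP: k1; lia.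
have cv1 : col j1 v = v (o2 hs) j1 *: delta_mx (o2 hs) 0 + v (o3 hs) j1 *: delta_mx (o3 hs) 0.
  apply: colsupp => // k k0 k1; apply: hv.
  rewrite -val_eqE /= in k0; rewrite -val_eqE /= in k1.
  apply/eqP => /= h; move/eqP: k0; move/eqP: k1; lia.
have cAv j : col j (A *m v) = A *m col j v by rewrite !colE mulmxA.
have Ae k : A *m delta_mx k 0 = col k A by rewrite colE.
set a := v (o0 hs) j0 in cv0; set b := v (o1 hs) j0 in cv0.
set c := v (o2 hs) j1 in cv1; set d := v (o3 hs) j1 in cv1.
set K := krylov_mx 2 A v.
pose D (k : 'I_(2 * s)) : 'cV[rat]_(2 * s) := delta_mx k 0.
pose x al be := al *: (D (Ck t1 j0) - 3%:R *: D (Ck t0 j0))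
   + be *: (D (Ck t1 j1) - 12%:R *: D (Ck t0 j1)).
have Kx al be : K *m x al be = al *: (col j0 (A *m v) - 3%:R *: col j0 v)
   + be *: (col j1 (A *m v) - 12%:R *: col j1 v).
  rewrite /x /D mulmxDr -!scalemxAr !mulmxBr -!scalemxAr -!colE !col_krylov !expr1 !expr0 !mul1mx.
  by [].
have Kx2 al be : K *m x al be = al *: (a *: (3%:R *: delta_mx (o0 hs) 0) + b *: (5%:R *: delta_mx (o1 hs) 0 + 4%:R *: delta_mx (o2 hs) 0) - 3%:R *: (a *: delta_mx (o0 hs) 0 + b *: delta_mx (o1 hs) 0))
  + be *: (c *: (- delta_mx (o1 hs) 0 + 10%:R *: delta_mx (o2 hs) 0) + d *: (12%:R *: delta_mx (o3 hs) 0) - 12%:R *: (c *: delta_mx (o2 hs) 0 + d *: delta_mx (o3 hs) 0)).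
  rewrite Kx !cAv cv0 cv1 !mulmxDr -!scalemxAr !Ae.
  by rewrite /A colA0 colA1 colA2 colA3.
have fin (y : 'cV[rat]_(2 * s)) : K *m y = 0 -> y != 0 -> \det K = 0.
  move=> Ky yn; apply/eqP; apply: contraT => dn.
  have Ku : K \in unitmx by rewrite unitmxE unitfE.
  by move: yn; rewrite -(mulKmx Ku y) Ky mulmx0 eqxx.
have t01 : (t1 == t0) = false by [].
have j01 : (j0 == j1) = false by rewrite -val_eqE.
have j10 : (j1 == j0) = false by rewrite -val_eqE.
case: (b =P 0) => [b0|bn0].
  apply: (fin (x 1 0)).
    rewrite Kx2 b0; apply/colP => i; rewrite !mxE; ring.
  apply/negP => /eqP/colP/(_ (Ck t1 j0)); rewrite !mxE !Ck_eq !eqxx t01 j01 /=.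
  move=> /eqP; rewrite ?mulr0 ?mulr1 ?subr0 ?addr0 ?oner_eq0 //.
apply: (fin (x (- c / 2%:R) (- b))).
  rewrite Kx2; apply/colP => i; rewrite !mxE; field; rewrite ?pnatr_eq0 //.
apply/negP => /eqP/colP/(_ (Ck t1 j1)); rewrite !mxE !Ck_eq !eqxx t01 j10 /=.
have -> : - c / 2 * (0 - 3 * 0) + - b * (1 - 12 * 0) = - b :> rat by ring.
move=> h; apply: bn0; by rewrite -[b]opprK h oppr0.
Qed.

Theorem mainTheorem1 (s : nat) (hs : (2 <= s)%N) :
  exists A : 'M[rat]_(2 * s),
    [/\ A \in unitmx,
        (exists e : 'I_(2 * s) -> algC,
            injective e /\ forall i, eigenvalue (map_mx ratr A) (e i))
      & forall v : 'M[rat]_(2 * s, s),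
          block_diag_sparse v -> \det (krylov_mx 2 A v) = 0].
Proof.
exists (Am rat (2 * s)); split.
- exact: A_unit.
- exists (fun i : 'I_(2 * s) => ((3 * i.+1)%:R : algC)); split.
    move=> i j /eqP; rewrite eqr_nat => /eqP h; apply: val_inj => /=; lia.
  by move=> i; rewrite mapA; exact: A_eig.
- by move=> v hv; exact: krylov_sing.
Qed.
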